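(* Assume Assumptions 1, 2 and 3 (stated in the context). Fix a triple $(i,j,k)$ and an interval $[T_0,T_1]\subseteq[0,T]$ with $T_0<T_1$, and let $\theta$ range over parameters for which $\bar{\mathcal{P}}_{ijk}(T_0,T_1,\theta)$ is defined. If $\theta$ varies so that for some $t\in[T_0,T_1]$ one has $\text{dist}(b_{ij}(t,\theta),o_k)\to d_0$, then $\bar{\mathcal{P}}_{ijk}(T_0,T_1,\theta)\to\infty$.
   Context: An articulated robot consists of finitely many rigid bodies. For a finite-dimensional trajectory parameter vector $\theta$ and $t\in[0,T]$, the $i$-th body occupies $b_i(t,\theta)\subset\mathbb{R}^3$; obstacles occupy $o\subset\mathbb{R}^3$; $d_0\ge0$ is a safe distance; $\text{dist}(A,B)$ is the shortest Euclidean distance between sets. Assumption 1: there are finite decompositions $b_i(t,\theta)=\bigcup_j b_{ij}(t,\theta)$, $o=\bigcup_k o_k$ such that each $(t,\theta)\mapsto\text{dist}(b_{ij}(t,\theta),o_k)$ is sufficiently smooth. Assumption 2: the feasible domain of $t$ and $\theta$ is bounded. Assumption 3: $\mathcal{P}$ is a sufficiently smooth, monotonically decreasing function on $(0,\infty)$ with $\lim_{x\to0}\mathcal{P}(x)=\infty$, $\lim_{x\to\infty}\mathcal{P}(x)=0$, and $\lim_{x\to0}x\mathcal{P}(x)=\infty$. Define $\mathcal{P}_{ijk}(t,\theta)=\mathcal{P}(\text{dist}(b_{ij}(t,\theta),o_k)-d_0)$ and $\bar{\mathcal{P}}_{ijk}(T_0,T_1,\theta)=\int_{T_0}^{T_1}\mathcal{P}_{ijk}(t,\theta)\,dt$.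 *)

(* Defs.v *)
From HB Require Import structures.
From mathcomp Require Import all_boot all_order all_algebra.
From mathcomp Require Import all_classical all_reals all_analysis.
Set Implicit Arguments. Unset Strict Implicit. Unset Printing Implicit Defensive.
Import Order.TTheory GRing.Theory Num.Theory.
Import numFieldNormedType.Exports.
Local Open Scope classical_set_scope.
Local Open Scope ring_scope.

Definition eucl3 {R : realType} (v : 'rV[R]_3) : R :=
  Num.sqrt (\sum_(i < 3) v ord0 i ^+ 2).

Definition setdist {R : realType} (A B : set 'rV[R]_3) : R :=
  inf [set eucl3 (a - b) | a in A & b in B].

Definition C1_on {R : realType} (V : normedModType R) (U : set V) (f : V -> R) :=
  (forall x, U x -> differentiable f x) /\
  (forall v x, U x -> {for x, continuous (fun y => 'D_v f y)}).

(* Main.v *)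
From HB Require Import structures.
From mathcomp Require Import all_boot all_order all_algebra.
From mathcomp Require Import all_classical all_reals all_analysis.
Require Import Defs.
From mathcomp Require Import lra.
Import Order.TTheory GRing.Theory Num.Theory.
Import numFieldNormedType.Exports.
Local Open Scope classical_set_scope.
Local Open Scope ring_scope.

Lemma P_ge0 (R : realType) (P : R -> R) :
  (forall x y, 0 < x -> x <= y -> P y <= P x) ->
  P x @[x --> +oo] --> 0 -> forall y, 0 < y -> 0 <= P y.
Proof.
move=> Pdec P0 y y0.
have <- : lim (P x @[x --> +oo]) = 0 by apply: cvg_lim.
apply: limr_le; first by apply/cvg_ex; exists 0.
near=> x; apply: Pdec => //; near: x; apply: nbhs_pinfty_ge; exact: num_real.
Unshelve. all: by end_near.
Qed.

Lemma slice_deriv (R : realType) (m : nat) (F : R * 'rV[R]_m -> R) u th :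
  differentiable F (u, th) ->
  derivable (fun s => F (s, th)) u 1 /\
  'D_1 (fun s => F (s, th)) u = 'D_((1, 0) : R * 'rV[R]_m) F (u, th).
Proof.
move=> dF.
have E : (fun h : R => h^-1 *: ((fun s => F (s, th)) (h *: 1 + u) - F (u, th))) =
    (fun h : R => h^-1 *: (F (h *: ((1, 0) : R * 'rV[R]_m) + (u, th)) - F (u, th))).
  apply/funext => h /=; congr (_ *: (F _ - _)).
  by apply/pair_equal_spec; split => /=; rewrite ?scaler0 ?add0r.
split.
  by rewrite /derivable E; exact: diff_derivable.
by rewrite /derive E.
Qed.
Lemma closure_bounded_compact (R : realType) (m : nat) (Theta : set 'rV[R]_m) :
  bounded_set Theta -> compact (closure Theta).
Proof.
move=> [M0 [M0r HM]].
have lt1 : M0 < `|M0| + 1 by apply: (le_lt_trans (real_ler_norm M0r)); rewrite ltrDl.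
have HM1 := HM _ lt1.
apply: bounded_closed_compact; last exact: closed_closure.
have sub : closure Theta `<=` closed_ball_ Num.norm (0 : 'rV[R]_m) (`|M0| + 1).
  have -> : closed_ball_ Num.norm (0 : 'rV[R]_m) (`|M0| + 1) =
     closure (closed_ball_ Num.norm (0 : 'rV[R]_m) (`|M0| + 1)).
    by apply/closure_id; exact: closed_closed_ball_.
  apply: closureS => x /HM1 /= Hx. rewrite /closed_ball_ /= sub0r normrN. exact: Hx.
exists (`|M0| + 1); split; first by rewrite realE; apply/orP; left.
move=> y Hy x /sub; rewrite /closed_ball_ /= sub0r normrN => H.
by apply: (le_trans H); apply: ltW.
Qed.

Lemma lip_bound (R : realType) (m : nat) (F : R * 'rV[R]_m -> R)
  (T : R) (Theta : set 'rV[R]_m) (U : set (R * 'rV[R]_m)) :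
  bounded_set Theta -> (`[0, T] `*` closure Theta) `<=` U -> C1_on U F ->
  exists L, 0 < L /\ forall th, Theta th -> forall s t, 0 <= s <= T -> 0 <= t <= T ->
    `|F (s, th) - F (t, th)| <= L * `|s - t|.
Proof.
move=> bT KU [dF cD].
set K := `[0, T] `*` closure Theta.
set D := fun p => 'D_((1, 0) : R * 'rV[R]_m) F p.
have cK : compact K.
  by apply: compact_setX; [exact: segment_compact | exact: closure_bounded_compact].
have cDK : {within K, continuous D}.
  by apply: continuous_in_subspaceT => p /set_mem Kp; apply: cD; apply: KU.
have := compact_bounded (continuous_compact cDK cK).
move=> [M0 [M0r HM]].
have lt1 : M0 < `|M0| + 1 by apply: (le_lt_trans (real_ler_norm M0r)); rewrite ltrDl.
have HM1 := HM _ lt1.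
exists (`|M0| + 1); split; first by apply: (lt_le_trans ltr01); rewrite lerDr.
have key : forall th, Theta th -> forall s t, 0 <= t -> t < s -> s <= T ->
    `|F (s, th) - F (t, th)| <= (`|M0| + 1) * `|s - t|.
  move=> th Th s t t0 ts sT.
  have inK : forall u, 0 <= u <= T -> K (u, th).
    move=> u uT; split => /=; first by rewrite in_itv /=.
    exact: subset_closure.
  have dsl : forall u, 0 <= u <= T -> derivable (fun s => F (s, th)) u 1 /\
      'D_1 (fun s => F (s, th)) u = D (u, th).
    by move=> u uT; apply: slice_deriv; apply: dF; apply: KU; apply: inK.
  have [||c cin ->] := @MVT R (fun s => F (s, th)) (fun u => D (u, th)) t s ts.
  - move=> x; rewrite in_itv /= => /andP [tx xs].
    have xT : 0 <= x <= T by rewrite (le_trans t0 (ltW tx)) (le_trans (ltW xs) sT).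
    have [d1 d2] := dsl x xT; apply: DeriveDef => //.
  - apply: derivable_within_continuous => x; rewrite in_itv /= => /andP [tx xs].
    have xT : 0 <= x <= T by rewrite (le_trans t0 tx) (le_trans xs sT).
    by have [d1 d2] := dsl x xT.
  - rewrite normrM; apply: ler_pM => //.
    apply: HM1; exists (c, th) => //; apply: inK.
    move: cin; rewrite in_itv /= => /andP [tc cs].
    by rewrite (le_trans t0 (ltW tc)) (le_trans (ltW cs) sT).
move=> th Th s t /andP [s0 sT] /andP [t0 tT].
case: (ltgtP t s) => [ts|st|->].
- exact: key.
- by rewrite distrC (distrC s); apply: key.
- by rewrite !subrr normr0 mulr0.
Qed.
Lemma right0_ex (R : realType) (g : R -> R) B :
  g x @[x --> 0^'+] --> +oo -> exists x0, 0 < x0 /\ forall x, 0 < x < x0 -> B <= g x.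
Proof.
move=> /cvgryPge /(_ B); rewrite near_withinE => /nbhs_ballP [e e0 He].
exists e; split => // x /andP [x0 xe]; apply: He => //.
by rewrite /ball /= sub0r normrN gtr0_norm.
Qed.

Lemma int_lb (R : realType) (g : R -> R) (T0 T1 a r c : R) :
  measurable_fun `[T0, T1] g -> (forall s, T0 <= s <= T1 -> 0 <= g s) ->
  T0 <= a -> a + r <= T1 -> 0 < r -> 0 <= c ->
  (forall s, a <= s <= a + r -> c <= g s) ->
  ((c * r)%:E <= \int[lebesgue_measure]_(s in `[T0, T1]) (g s)%:E)%E.
Proof.
move=> mg g0 Ta aT r0 c0 gc.
have sub : `[a, a + r] `<=` `[T0, T1].
  move=> s /=; rewrite !in_itv /= => /andP [aS sa].
  by rewrite (le_trans Ta aS) (le_trans sa aT).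
have mJ : measurable `[a, a + r] by [].
have mK : measurable `[T0, T1] by [].
set I1 := (\int[lebesgue_measure]_(s in `[a, (a + r)%R]) (g s)%:E)%E.
apply: (@le_trans _ _ I1); last first.
  apply: ge0_subset_integral => //.
    exact/measurable_realfun.measurable_EFinP.
apply: (@le_trans _ (\bar R) (\int[lebesgue_measure]_(s in `[a, (a + r)%R]) (cst c%:E s))%E).
  have HL : (lebesgue_measure (`[a, (a + r)%R]%classic : set R) = r%:E)%E.
    rewrite lebesgue_measure_itv /= lte_fin ltrDl r0 /=.
    by rewrite -EFinD addrAC subrr add0r.
  rewrite integral_cst // EFinM -HL; exact: le_refl.
apply: ge0_le_integral => //.
by apply/measurable_realfun.measurable_EFinP; apply: measurable_funS mg.
Qed.
Theorem lemma2 (R : realType) (m : nat)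
  (b : R -> 'rV[R]_m -> set 'rV[R]_3)   (* the piece b_ij(t, theta) *)
  (o : set 'rV[R]_3)                    (* the obstacle piece o_k *)
  (d0 T T0 T1 : R) (Theta : set 'rV[R]_m) (P : R -> R)
  (U : set (R * 'rV[R]_m)) :
  0 <= d0 ->
  (* Assumption 2: the feasible domain [0,T] x Theta is bounded *)
  bounded_set Theta ->
  (* Assumption 1: (t,theta) |-> dist(b_ij(t,theta), o_k) is C^1 on an open
     neighbourhood of the closure of the feasible domain *)
  open U -> (`[0, T] `*` closure Theta) `<=` U ->
  C1_on U (fun p : R * 'rV[R]_m => setdist (b p.1 p.2) o) ->
  (* Assumption 3 *)
  (forall x, 0 < x -> derivable P x 1) ->
  (forall x, 0 < x -> {for x, continuous (derive1 P)}) ->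
  (forall x y, 0 < x -> x <= y -> P y <= P x) ->
  P x @[x --> 0^'+] --> +oo ->
  P x @[x --> +oo] --> 0 ->
  (x * P x) @[x --> 0^'+] --> +oo ->
  0 <= T0 -> T0 < T1 -> T1 <= T ->
  forall (theta : nat -> 'rV[R]_m),
    (forall n, Theta (theta n)) ->
    (* Pbar_ijk(T0,T1,theta n) is defined *)
    (forall n t, T0 <= t <= T1 -> d0 < setdist (b t (theta n)) o) ->
    forall t, T0 <= t <= T1 ->
      setdist (b t (theta n)) o @[n --> \oo] --> d0 ->
      (\int[lebesgue_measure]_(s in `[T0, T1])
          (P (setdist (b s (theta n)) o - d0))%:E)%E @[n --> \oo] --> +oo%E.
Proof.
Proof.
move=> d0ge bT oU KU C1 Pder Pcont Pdec P0 Ppinf xP0 T00 T01 T1T theta Th pos t tin cvg.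
have [L [L0 HL]] := @lip_bound R m _ T Theta U bT KU C1.
have Pge0 := @P_ge0 R P Pdec Ppinf.
have Pc : forall x, 0 < x -> {for x, continuous P}.
  by move=> x x0; apply: differentiable_continuous; apply/derivable1_diffP; apply: Pder.
have inT : forall s, T0 <= s <= T1 -> 0 <= s <= T.
  move=> s /andP [s0 s1]; apply/andP; split.
    exact: le_trans T00 s0.
  exact: le_trans s1 T1T.
have inK : forall s n, T0 <= s <= T1 -> (`[0, T] `*` closure Theta) (s, theta n).
  move=> s n sin; split => /=; first by rewrite in_itv /=; apply: inT.
  exact: subset_closure.
have meas : forall n, measurable_fun `[T0, T1]
    (fun s => P (setdist (b s (theta n)) o - d0)).
  move=> n; apply: measurable_realfun.subspace_continuous_measurable_fun => //.
  apply: continuous_in_subspaceT => s /set_mem; rewrite /= in_itv /= => sin.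
  have [d1 _] := @slice_deriv R m _ _ _ (C1.1 (s, theta n) (KU _ (inK s n sin))).
  have cs := differentiable_continuous (proj1 (derivable1_diffP _ _) d1).
  apply: (@continuous_comp _ _ _ (fun s => setdist (b s (theta n)) o - d0) P).
    exact: (cvgB cs (cvg_cst d0)).
  by apply: Pc; rewrite subr_gt0; apply: pos.
apply/cvgeyPge => A.
have [x0 [x00 Hx0]] := @right0_ex R _ (2 * L * `|A|) xP0.
set dl := Num.min x0 (L * (T1 - T0)).
have dl0 : 0 < dl by rewrite lt_min x00 mulr_gt0 // subr_gt0.
have dlx : dl <= x0 by rewrite ge_min lexx.
have dlT : dl <= L * (T1 - T0) by rewrite ge_min lexx orbT.
have dl20 : 0 < dl / 2 by rewrite divr_gt0.
have := cvgr_dist_lt _ _ cvg (dl / 2) dl20.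
move=> Hfil; near=> n; have Hn := near (Hfil _) n.
set e := setdist (b t (theta n)) o - d0.
have e0 : 0 < e by rewrite subr_gt0; apply: pos.
have edl : e < dl / 2.
  apply: (le_lt_trans (ler_norm _)); rewrite /e -normrN opprB; exact: Hn.
set r := e / L.
have r0 : 0 < r by rewrite divr_gt0.
have Lr : L * r = e by rewrite mulrC /r divfK // lt0r_neq0.
have rlt : r < (T1 - T0) / 2.
  rewrite /r ltr_pdivrMr //.
  have -> : (T1 - T0) / 2 * L = (L * (T1 - T0)) / 2 by rewrite mulrC mulrA.
  lra.
have Pe : 2 * L * `|A| <= (2 * e) * P (2 * e).
  by apply: Hx0; apply/andP; split; lra.
have cA : A <= P (2 * e) * r.
  rewrite /r mulrA ler_pdivlMr //.
  have := ler_norm A; nra.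
have key : forall a, T0 <= a -> a + r <= T1 -> t - r <= a -> a <= t ->
    (A%:E <= \int[lebesgue_measure]_(s in `[T0, T1])
          (P (setdist (b s (theta n)) o - d0))%:E)%E.
  move=> a Ta aT ta aT2.
  have G1 : forall s, T0 <= s <= T1 -> 0 <= P (setdist (b s (theta n)) o - d0).
    by move=> s sin; apply: Pge0; rewrite subr_gt0; apply: pos.
  have G2 : 0 <= P (2 * e) by apply: Pge0; lra.
  suff G3 : forall s, a <= s <= a + r -> P (2 * e) <= P (setdist (b s (theta n)) o - d0).
    have HI := @int_lb R (fun s => P (setdist (b s (theta n)) o - d0)) T0 T1 a r (P (2 * e)) (meas n) G1 Ta aT r0 G2 G3.
    by apply: le_trans HI; rewrite lee_fin.
  move=> s sin.
  have sin' : T0 <= s <= T1.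
    by move/andP: sin => [s1 s2]; apply/andP; split; lra.
  apply: Pdec; first by rewrite subr_gt0; apply: pos.
  have := HL _ (Th n) s t (inT _ sin') (inT _ tin).
  have : `|s - t| <= r by rewrite ler_distl; move/andP: sin => [s1 s2]; apply/andP; split; lra.
  move=> H1 H2.
  have H3 : L * `|s - t| <= L * r by rewrite ler_pM2l.
  have := ler_norm (setdist (b s (theta n)) o - setdist (b t (theta n)) o).
  rewrite /= in H2 *; rewrite /e in Lr *; lra.
case: (lerP (t + r) T1) => H.
  by apply: (key t) => //; [case/andP: tin | lra].
apply: (key (t - r)); [by case/andP: tin => ? ?; lra | by rewrite subrK; case/andP: tin | lra | lra].
Unshelve. all: by end_near.
Qed.
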